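(* Let $D\ge 1$. Any (randomized) voting rule that has access only to the top-$t$ prefix of each agent's ranking and achieves metric distortion at most $D$ has utilitarian distortion $\Omega\!\left(\frac{m\sqrt m}{D\,t\sqrt t}\right)$.
   Context: Setting: $n$ agents, $m$ alternatives; each agent has an underlying strict ranking, but the rule only receives each agent's ordered list of her top $t$ alternatives (a top-$t$ profile $\vec\sigma_t$) and outputs a probability distribution over alternatives. A full profile extends $\vec\sigma_t$ if each agent's top-$t$ prefix coincides with that in $\vec\sigma_t$. Metric framework: a pseudometric $d$ on agents and alternatives is consistent with a full profile $\vec\sigma$ if $X\succ_iY\Rightarrow d(i,X)\le d(i,Y)$, and consistent with $\vec\sigma_t$ if it is consistent with some full profile extending $\vec\sigma_t$. $\mathrm{SC}(X,d)=\sum_id(i,X)$. Metric distortion of a rule $f$: $\sup_{\vec\sigma_t}\sup_{d}\mathbb E_{X\sim f(\vec\sigma_t)}[\mathrm{SC}(X,d)]/\min_X\mathrm{SC}(X,d)$ over consistent $d$. Utilitarian framework: unit-sum nonnegative utilities $u_i$ ($\sum_Xu_i(X)=1$), consistent with a full profile if $X\succ_iY\Rightarrow u_i(X)\ge u_i(Y)$ and with $\vec\sigma_t$ if consistent with some full extension. $\mathrm{SW}(X,\vec u)=\sum_iu_i(X)$. Utilitarian distortion: $\sup_{\vec\sigma_t}\sup_{\vec u}\max_X\mathrm{SW}(X,\vec u)/\mathbb E_{X\sim f(\vec\sigma_t)}[\mathrm{SW}(X,\vec u)]$. *)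

(* Defs.v *)
From HB Require Import structures.
From mathcomp Require Import all_boot all_order all_algebra all_fingroup.
From mathcomp Require Import reals.
Set Implicit Arguments. Unset Strict Implicit. Unset Printing Implicit Defensive.
Import Order.TTheory GRing.Theory Num.Theory.
Local Open Scope ring_scope.

Section Voting.
Variable R : realType.

(* A full ranking over alternatives 'I_m is a permutation sending a position
   (0 = top) to the alternative at that position. *)
Definition prefers (m : nat) (s : {perm 'I_m}) (X Y : 'I_m) : bool :=
  ((s^-1)%g X < (s^-1)%g Y)%N.

Definition extends (n m t : nat) (s : 'I_n -> {perm 'I_m})
    (st : 'I_n -> t.-tuple 'I_m) : Prop :=
  forall i, tval (st i) = take t [seq s i p | p <- enum 'I_m].

Definition is_pseudometric (T : Type) (d : T -> T -> R) : Prop :=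
  [/\ forall x y, 0 <= d x y, forall x, d x x = 0,
      forall x y, d x y = d y x
    & forall x y z, d x z <= d x y + d y z].

Definition metric_consistent (n m : nat) (d : 'I_n + 'I_m -> 'I_n + 'I_m -> R)
    (s : 'I_n -> {perm 'I_m}) : Prop :=
  forall i X Y, prefers (s i) X Y -> d (inl i) (inr X) <= d (inl i) (inr Y).

Definition metric_consistent_t (n m t : nat)
    (d : 'I_n + 'I_m -> 'I_n + 'I_m -> R) (st : 'I_n -> t.-tuple 'I_m) : Prop :=
  exists s, extends s st /\ metric_consistent d s.

Definition SC (n m : nat) (d : 'I_n + 'I_m -> 'I_n + 'I_m -> R) (X : 'I_m) : R :=
  \sum_(i < n) d (inl i) (inr X).

Definition unit_sum (n m : nat) (u : 'I_n -> 'I_m -> R) : Prop :=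
  forall i, (forall X, 0 <= u i X) /\ \sum_(X < m) u i X = 1.

Definition util_consistent (n m : nat) (u : 'I_n -> 'I_m -> R)
    (s : 'I_n -> {perm 'I_m}) : Prop :=
  forall i X Y, prefers (s i) X Y -> u i Y <= u i X.

Definition util_consistent_t (n m t : nat) (u : 'I_n -> 'I_m -> R)
    (st : 'I_n -> t.-tuple 'I_m) : Prop :=
  exists s, extends s st /\ util_consistent u s.

Definition SW (n m : nat) (u : 'I_n -> 'I_m -> R) (X : 'I_m) : R :=
  \sum_(i < n) u i X.

(* A (randomized) top-t voting rule: for every number of agents n, maps a
   top-t profile to a probability distribution over alternatives. *)
Definition rule (m t : nat) := forall n : nat, ('I_n -> t.-tuple 'I_m) -> 'I_m -> R.

Definition is_rule (m t : nat) (f : rule m t) : Prop :=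
  forall n st, (forall X, 0 <= f n st X) /\ \sum_(X < m) f n st X = 1.

Definition expect (m : nat) (p : 'I_m -> R) (g : 'I_m -> R) : R :=
  \sum_(X < m) p X * g X.

(* metric distortion <= D: for every top-t profile and every consistent
   pseudometric, E[SC] <= D * min_X SC(X) (multiplicative form of the ratio). *)
Definition metric_distortion_le (m t : nat) (f : rule m t) (D : R) : Prop :=
  forall n (st : 'I_n -> t.-tuple 'I_m) d,
    is_pseudometric d -> metric_consistent_t d st ->
    forall X, expect (f n st) (SC d) <= D * SC d X.

(* utilitarian distortion >= B: the supremum of max_X SW(X) / E[SW] is >= B
   (ratio read as +oo when E[SW] = 0). *)
Definition util_distortion_ge (m t : nat) (f : rule m t) (B : R) : Prop :=
  forall B', B' < B ->
    exists n (st : 'I_n -> t.-tuple 'I_m) (u : 'I_n -> 'I_m -> R) (X : 'I_m),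
      [/\ unit_sum u, util_consistent_t u st
        & B' * expect (f n st) (SW u) < SW u X].

End Voting.

(* Main.v *)
From mathcomp Require Import all_boot all_order all_algebra all_fingroup.
From mathcomp Require Import reals.
From mathcomp Require Import zify ring lra.
Import Order.TTheory GRing.Theory Num.Theory.
Require Import Defs.
Set Implicit Arguments. Unset Strict Implicit. Unset Printing Implicit Defensive.

Lemma ext_perm (m t : nat) (x0 : 'I_m) (st : seq 'I_m) (S : pred 'I_m) :
  size st = t -> uniq st -> all S st ->
  exists s : {perm 'I_m}, take t [seq s p | p <- enum 'I_m] = st /\
    forall X Y, prefers s X Y -> ~~ S X -> ~~ S Y.
Proof.
move=> sz ust aS.
set A := st ++ [seq x <- enum 'I_m | S x && (x \notin st)].
set C := [seq x <- enum 'I_m | ~~ S x].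
set L := A ++ C.
have inA x : x \in A -> S x.
  rewrite mem_cat => /orP[/(allP aS)//|]; by rewrite mem_filter => /andP[/andP[]].
have inC x : x \in C -> ~~ S x by rewrite mem_filter => /andP[].
have uL : uniq L.
  rewrite cat_uniq; apply/and3P; split.
  - rewrite cat_uniq ust /= filter_uniq ?enum_uniq // andbT.
    apply/hasPn => x; rewrite mem_filter => /andP[/andP[_ ->]] //.
  - apply/hasPn => x /inC nS; apply/negP => /inA; by rewrite (negbTE nS).
  - by rewrite filter_uniq ?enum_uniq.
have memL x : x \in L.
  rewrite mem_cat; case Sx: (S x).
  - rewrite mem_cat; case: (boolP (x \in st)) => //= nx.
    by rewrite mem_filter Sx nx mem_enum.
  - by rewrite orbC mem_filter Sx mem_enum.
have sL : size L = m.
  have pe : perm_eq L (enum 'I_m).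
    by apply: uniq_perm => //; [exact: enum_uniq | move=> x; rewrite memL mem_enum].
  by rewrite (perm_size pe) size_enum_ord.
have finj : injective (fun p : 'I_m => nth x0 L p).
  move=> p1 p2 /eqP; rewrite nth_uniq ?sL // => /eqP; exact: val_inj.
exists (perm finj); split.
  have -> : [seq perm finj p | p <- enum 'I_m] = L.
    rewrite -[RHS](mkseq_nth x0 L) sL /mkseq -val_enum_ord -map_comp.
    by apply: eq_map => p /=; rewrite permE.
  by rewrite /L /A -catA take_size_cat.
move=> X Y; rewrite /prefers.
have idx Z : index Z L = ((perm finj)^-1)%g Z.
  have e : Z = nth x0 L (((perm finj)^-1)%g Z).
    by rewrite -[in LHS](permKV (perm finj) Z) permE.
  by rewrite {1}e index_uniq ?sL.
rewrite -!idx => lt nSX; apply/negP => SY.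
have XA : X \notin A by apply/negP => /inA; rewrite (negbTE nSX).
have YA : Y \in A.
  move: (memL Y); rewrite mem_cat => /orP[//|/inC]; by rewrite SY.
move: lt; rewrite /L (index_cat X A C) (index_cat Y A C) (negbTE XA) YA.
have h1 : index Y A < size A by rewrite index_mem.
move=> h2; have := ltn_trans h2 h1; by rewrite ltnNge leq_addr.
Qed.

Lemma ext_profile n m t (x0 : 'I_m) (st : 'I_n -> t.-tuple 'I_m) (S : 'I_n -> pred 'I_m) :
  (forall i, uniq (st i)) -> (forall i, all (S i) (st i)) ->
  exists s : 'I_n -> {perm 'I_m}, extends s st /\
    forall i X Y, prefers (s i) X Y -> ~~ S i X -> ~~ S i Y.
Proof.
move=> ust aS.
pose P i (s : {perm 'I_m}) := (take t [seq s p | p <- enum 'I_m] == tval (st i)) &&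
  [forall X, forall Y, prefers s X Y ==> ~~ S i X ==> ~~ S i Y].
have exP i : P i (odflt 1%g [pick s | P i s]).
  case: pickP => [s //|none] /=.
  have [s [h1 h2]] := @ext_perm m t x0 (st i) (S i) (size_tuple _) (ust i) (aS i).
  move: (none s); rewrite /P h1 eqxx /= => /negP; case.
  apply/forallP => X; apply/forallP => Y; apply/implyP => pr; apply/implyP; exact: h2.
exists (fun i => odflt 1%g [pick s | P i s]); split.
  by move=> i; have /andP[/eqP -> _] := exP i.
move=> i X Y pr nS; have /andP[_ /forallP /(_ X) /forallP /(_ Y)] := exP i.
by rewrite pr nS.
Qed.

Definition tup (m' t k : nat) : t.-tuple 'I_m'.+1 := [tuple inord (k * t + i) | i < t].

Lemma tup_mem m' t k (X : 'I_m'.+1) : k * t + t <= m'.+1 -> X \in tup m' t k ->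
  k * t <= X < k * t + t.
Proof.
move=> le /mapP[i _ ->]; rewrite inordK; last by have := ltn_ord i; lia.
by have := ltn_ord i; lia.
Qed.

Lemma tup_uniq m' t k : k * t + t <= m'.+1 -> uniq (tup m' t k).
Proof.
move=> le; rewrite -(map_inj_uniq val_inj) /tup /= -map_comp.
rewrite (@eq_map _ _ _ (fun i : 'I_t => k * t + i)).
  by rewrite (map_comp (addn (k * t)) val) val_enum_ord -iotaDl iota_uniq.
move=> i /=; rewrite inordK //; have := ltn_ord i; lia.
Qed.

Lemma tup_mem0 m' t k : 0 < t -> k * t + t <= m'.+1 -> inord (k * t) \in tup m' t k.
Proof.
move=> t0 le; apply/mapP; exists (Ordinal t0); first by rewrite mem_enum.
by rewrite addn0.
Qed.

Lemma card_tup m' t k : k * t + t <= m'.+1 -> #|[set x in tup m' t k]| = t.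
Proof. by move=> le; rewrite cardsE; move/card_uniqP: (tup_uniq le) => ->; rewrite size_tuple. Qed.

Lemma card_ge m k : #|[set X : 'I_m | k <= X]| = m - k.
Proof.
have E m0 : #|[set X : 'I_m0 | k <= X]| = \sum_(i < m0) (k <= i : nat).
  by rewrite -sum1_card big_mkcond; apply: eq_bigr => i _; rewrite inE; case: (k <= i).
rewrite E; elim: m => [|m IH]; first by rewrite big_ord0.
rewrite big_ord_recr /= IH; case: (leqP k m) => h /=; lia.
Qed.

Section R.
Variable R : realType.
Local Open Scope ring_scope.

Definition cutd n m (sd : 'I_n + 'I_m -> bool) : 'I_n + 'I_m -> 'I_n + 'I_m -> R :=
  fun x y => (sd x != sd y)%:R.

Lemma cut_pm n m (sd : 'I_n + 'I_m -> bool) : is_pseudometric (cutd sd).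
Proof.
rewrite /cutd; split.
- by move=> x y; rewrite ler0n.
- by move=> x; rewrite eqxx.
- by move=> x y; rewrite eq_sym.
- by move=> x y z; case: (sd x); case: (sd y); case: (sd z); rewrite /= ?addr0 ?add0r ?ler01 ?lexx ?ler0n ?ler_wpDr.
Qed.

Lemma cut_bound n m t (x0 : 'I_m) (st : 'I_n -> t.-tuple 'I_m) (sd : 'I_n + 'I_m -> bool)
  (f : rule R m t) (D : R) :
  metric_distortion_le f D -> (forall i, uniq (st i)) ->
  (forall i x, x \in st i -> sd (inr x) = sd (inl i)) ->
  forall X, expect (f n st) (SC (cutd sd)) <= D * SC (cutd sd) X.
Proof.
move=> H ust side X; apply: H; first exact: cut_pm.
have [s [ex cons]] := ext_profile x0 (S := fun i x => sd (inr x) == sd (inl i)) ust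
  (fun i => introT allP (fun x h => introT eqP (side i x h))).
exists s; split => // i Y Z pr; rewrite /cutd.
case: (boolP (sd (inr Y) == sd (inl i))) => e.
  by rewrite eq_sym e ler0n.
have hz := cons i Y Z pr e; rewrite eq_sym in e; rewrite eq_sym in hz.
by rewrite e hz lexx.
Qed.

Definition uset n m (S : 'I_n -> {set 'I_m}) : 'I_n -> 'I_m -> R :=
  fun i X => (X \in S i)%:R / #|S i|%:R.

Lemma sum_ind m (A : {set 'I_m}) : \sum_(X < m) ((X \in A)%:R : R) = #|A|%:R.
Proof.
transitivity (\sum_(X in A) (1 : R)).
  by rewrite [RHS]big_mkcond; apply: eq_bigr => X _; case: (X \in A).
by rewrite sumr_const.
Qed.

Lemma uset_ge0 n m (S : 'I_n -> {set 'I_m}) i X : 0 <= uset S i X.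
Proof. by rewrite /uset divr_ge0 ?ler0n. Qed.

Lemma uset_unit n m (S : 'I_n -> {set 'I_m}) :
  (forall i, S i != set0) -> unit_sum (uset S).
Proof.
move=> ne i; split; first exact: uset_ge0.
rewrite /uset -mulr_suml sum_ind divff // pnatr_eq0 -lt0n card_gt0; exact: ne.
Qed.

Lemma uset_cons n m t (x0 : 'I_m) (st : 'I_n -> t.-tuple 'I_m) (S : 'I_n -> {set 'I_m}) :
  (forall i, uniq (st i)) -> (forall i x, x \in st i -> x \in S i) ->
  util_consistent_t (uset S) st.
Proof.
move=> ust sub.
have [s [ex cons]] := ext_profile x0 (S := fun i x => x \in S i) ust
  (fun i => introT allP (sub i)).
exists s; split => // i X Y pr; rewrite /uset.
case: (boolP (Y \in S i)) => YS.
  case: (boolP (X \in S i)) => XS; first by rewrite lexx.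
  by have := cons i X Y pr XS; rewrite YS.
by rewrite mul0r divr_ge0 ?ler0n.
Qed.

Lemma conclude_lt (B' Bv E S : R) : B' < Bv -> 0 <= E -> 0 < S -> Bv * E <= S -> B' * E < S.
Proof.
move=> lt E0 S0 h; have [->|En] := eqVneq E 0; first by rewrite mulr0.
have Ep : 0 < E by rewrite lt_def En E0.
by apply: lt_le_trans h; rewrite ltr_pM2r.
Qed.

Lemma div_le (a b c : R) : 0 <= a -> 0 < c -> c <= b -> a / b <= a / c.
Proof.
move=> a0 c0 cb; apply: ler_wpM2l => //.
have b0 : 0 < b by apply: lt_le_trans cb.
by rewrite lef_pV2 ?posrE.
Qed.

Lemma sum_ev (T : finType) (F : T -> R) :
  \sum_(i < #|T|) F (enum_val i) = \sum_(x : T) F x.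
Proof. by rewrite -big_enum_val. Qed.

Lemma sum_pair (I J : finType) (F : I * J -> R) :
  \sum_(x : I * J) F x = \sum_(a : I) \sum_(b : J) F (a, b).
Proof. by rewrite pair_big; apply: eq_bigr => -[a b]. Qed.

Lemma sum_ind_le1 r (P : 'I_r -> bool) (c : bool) :
  (forall a, P a -> c) -> (forall a a', P a -> P a' -> a = a') ->
  \sum_(a < r) ((P a)%:R : R) <= c%:R.
Proof.
move=> Pc uq; case: (pickP P) => [a Pa|none].
  rewrite (bigD1 a) //= Pa (Pc a Pa) big1 ?addr0 // => a' ne.
  by case: (boolP (P a')) => // h; rewrite (uq _ _ h Pa) eqxx in ne.
by rewrite big1 ?ler0n // => a _; rewrite none.
Qed.

End R.

Section Inst.
Variable R : realType.
Local Open Scope ring_scope.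
Variables (m' t r g : nat).
Hypotheses (t0 : (0 < t)%N) (r0 : (0 < r)%N) (g1 : (1 < g)%N) (hbig : (4 * r * t <= m'.+1)%N).

Local Notation AT := ('I_r * 'I_g.+1)%type.
Definition blk (x : AT) : nat := if x.2 == ord_max then r + x.1 else x.1.
Definition stT (x : AT) := tup m' t (blk x).
Definition Hs : {set 'I_m'.+1} := [set X : 'I_m'.+1 | 2 * r * t <= X]%N.
Definition Bnd : 'I_m'.+1 := inord (2 * r * t).
Definition SxT (x : AT) : {set 'I_m'.+1} :=
  [set y in stT x] :|: (if x.2 == ord_max then [set Bnd] else Hs).
Definition sti (i : 'I_#|{: AT}|) := stT (enum_val i).
Definition Sxi (i : 'I_#|{: AT}|) := SxT (enum_val i).
Definition uT (x : AT) (Y : 'I_m'.+1) : R := (Y \in SxT x)%:R / #|SxT x|%:R.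

Lemma blk_small (x : AT) : x.2 == ord_max -> (r * t <= blk x * t /\ blk x * t + t <= 2 * r * t)%N.
Proof. rewrite /blk => ->; have := ltn_ord x.1; nia. Qed.

Lemma blk_big (x : AT) : x.2 != ord_max -> (blk x * t + t <= r * t)%N.
Proof. rewrite /blk => /negbTE ->; have := ltn_ord x.1; nia. Qed.

Lemma blk_le (x : AT) : (blk x * t + t <= 2 * r * t)%N.
Proof.
case: (boolP (x.2 == ord_max)) => h; first by case: (blk_small h).
have := blk_big h; nia.
Qed.

Lemma blk_m (x : AT) : (blk x * t + t <= m'.+1)%N.
Proof. have := blk_le x; nia. Qed.

Lemma Bnd_val : val Bnd = (2 * r * t)%N.
Proof. rewrite /Bnd /= inordK //; nia. Qed.

Lemma stT_uniq x : uniq (stT x).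
Proof. exact: tup_uniq (blk_m x). Qed.

Lemma stT_mem x (y : 'I_m'.+1) : y \in stT x -> (blk x * t <= y < blk x * t + t)%N.
Proof. exact: tup_mem (blk_m x). Qed.

Lemma SxT_card_ge x : (t <= #|SxT x|)%N.
Proof.
rewrite -{1}(card_tup (blk_m x)); apply: subset_leq_card; exact: subsetUl.
Qed.

Lemma uT_ge0 x Y : 0 <= uT x Y.
Proof. by rewrite /uT divr_ge0 ?ler0n. Qed.

Lemma SW_eq (Y : 'I_m'.+1) : SW (uset R Sxi) Y = \sum_(a < r) \sum_(b < g.+1) uT (a, b) Y.
Proof. by rewrite /SW /uset /Sxi (sum_ev (fun x => uT x Y)) sum_pair. Qed.

Lemma inst_unit : unit_sum (uset R Sxi).
Proof.
apply: (@uset_unit R) => i; apply/set0Pn; exists (inord (blk (enum_val i) * t)).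
rewrite /Sxi /SxT inE; apply/orP; left; rewrite inE.
exact: tup_mem0 t0 (blk_m _).
Qed.

Lemma inst_cons : util_consistent_t (uset R Sxi) sti.
Proof.
apply: (@uset_cons R _ _ _ Bnd) => [i|i x h]; first exact: stT_uniq.
by rewrite /Sxi /SxT inE; apply/orP; left; rewrite inE.
Qed.

Lemma inst_SWB : r%:R / (t.+1)%:R <= SW (uset R Sxi) Bnd.
Proof.
rewrite SW_eq.
have h a : 1 / (t.+1)%:R <= \sum_(b < g.+1) uT (a, b) Bnd.
  rewrite big_ord_recr /=; apply: ler_wpDl; first by apply: sumr_ge0 => b _; exact: uT_ge0.
  have c1 := SxT_card_ge (a, ord_max).
  have c2 : (#|SxT (a, ord_max)| <= t.+1)%N.
    rewrite /SxT /= eqxx; apply: (leq_trans (leq_card_setU _ _)).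
    by rewrite cards1 card_tup ?addn1 //; exact: (blk_m (a, ord_max)).
  have mem : Bnd \in SxT (a, ord_max) by rewrite /SxT /= eqxx !inE eqxx orbT.
  rewrite /uT mem; apply: div_le => //; last by rewrite ler_nat.
  by rewrite ltr0n; lia.
apply: le_trans (ler_sum _ (fun a _ => h a)).
by rewrite sumr_const card_ord mulr_natl mul1r.
Qed.

Lemma card_AT : #|{: AT}| = (r * g.+1)%N.
Proof. by rewrite card_prod !card_ord. Qed.

Lemma Bnd_in : Bnd \in Hs.
Proof. by rewrite inE Bnd_val. Qed.

Definition X0 : 'I_m'.+1 := inord 0.
Lemma X0_val : val X0 = 0%N.
Proof. by rewrite /X0 /= inordK. Qed.

Lemma sti_uniq i : uniq (sti i).
Proof. exact: stT_uniq. Qed.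

Section Rule.
Variables (f : rule R m'.+1 t) (D : R).
Hypotheses (isr : is_rule f) (md : metric_distortion_le f D).
Local Notation p := (@f #|{: AT}| sti).

Lemma p_ge0 Y : 0 <= p Y.
Proof. by case: (isr sti) => h _; exact: h. Qed.

Lemma p_sum : \sum_(Y < m'.+1) p Y = 1.
Proof. by case: (isr sti). Qed.

Definition sdh (z : 'I_#|{: AT}| + 'I_m'.+1) : bool :=
  match z with inl _ => false | inr Y => (2 * r * t <= Y)%N end.

Lemma p_hidden Y : Y \in Hs -> p Y = 0.
Proof.
move=> YH.
have side i x : x \in sti i -> sdh (inr x) = sdh (inl i).
  move=> /stT_mem h; have := blk_le (enum_val i); rewrite /sdh /=; case: leqP => //; lia.
have := cut_bound X0 md sti_uniq side X0.
have -> : SC (cutd R sdh) X0 = 0.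
  by rewrite /SC big1 // => i _; rewrite /cutd /= X0_val; case: leqP => h //; lia.
rewrite mulr0 => hle.
have hs : forall Z, true -> 0 <= p Z * SC (cutd R sdh) Z.
  by move=> Z _; rewrite mulr_ge0 ?p_ge0 // sumr_ge0 // => i _; rewrite /cutd ler0n.
have hsum : \sum_(Z < m'.+1) p Z * SC (cutd R sdh) Z = 0.
  by apply/le_anti; rewrite -/(expect _ _) hle /= sumr_ge0.
have e0 := psumr_eq0P hs hsum.
move: (e0 Y isT) => /eqP; rewrite mulf_eq0 => /orP[/eqP //|].
rewrite /SC /cutd /=.
have -> : (2 * r * t <= Y)%N = true by rewrite inE in YH.
rewrite /= sumr_const card_ord => h; exfalso; move: h.
rewrite pnatr_eq0 card_AT => /eqP; nia.
Qed.

Lemma widen_neq (b : 'I_g) : (widen_ord (leqnSn g) b == ord_max) = false.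
Proof. by apply/negbTE; rewrite -val_eqE /= neq_ltn ltn_ord. Qed.

Definition sm (Y : 'I_m'.+1) : bool := (r * t <= Y < 2 * r * t)%N.

Lemma Hs_card : #|Hs| = (m'.+1 - 2 * r * t)%N.
Proof. exact: card_ge. Qed.

Definition hh : nat := (m'.+1 - 2 * r * t)%N.

Lemma hh_gt0 : (0 < hh)%N.
Proof. rewrite /hh; nia. Qed.

Lemma uT_bound a b Y : Y \notin Hs ->
  uT (a, b) Y <= (Y \in stT (a, b))%:R / (if b == ord_max then t else hh)%:R.
Proof.
move=> YH; rewrite /uT.
have -> : (Y \in SxT (a, b)) = (Y \in stT (a, b)).
  rewrite /SxT inE inE; case: (Y \in stT (a, b)) => //=.
  case: (b == ord_max) => //=; last by apply/negbTE.
  rewrite inE; apply/negP => /eqP e; move: YH; by rewrite e Bnd_in.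
case: (Y \in stT (a, b)); last by rewrite !mul0r.
apply: div_le => //.
  by case: (b == ord_max); rewrite ltr0n ?hh_gt0.
rewrite ler_nat; case: ifP => e; first exact: SxT_card_ge.
rewrite /hh -Hs_card; apply: subset_leq_card; rewrite /SxT /= e.
exact: subsetUr.
Qed.

Lemma stT_widen a (b : 'I_g) : stT (a, widen_ord (leqnSn g) b) = tup m' t a.
Proof. by rewrite /stT /blk /= widen_neq. Qed.

Lemma stT_max a : stT (a, ord_max) = tup m' t (r + a).
Proof. by rewrite /stT /blk /= eqxx. Qed.

Lemma SW_bound Y : Y \notin Hs ->
  SW (uset R Sxi) Y <= g%:R / hh%:R * (Y < r * t)%N%:R + 1 / t%:R * (sm Y)%:R.
Proof.
move=> YH; rewrite SW_eq.
apply: le_trans (ler_sum _ (fun a _ => ler_sum _ (fun b _ => uT_bound a b YH))) _.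
rewrite (eq_bigr (fun a : 'I_r => g%:R / hh%:R * (Y \in tup m' t a)%:R +
   1 / t%:R * (Y \in tup m' t (r + a))%:R)); last first.
  move=> a _; rewrite big_ord_recr /= eqxx stT_max.
  rewrite (eq_bigr (fun _ => (Y \in tup m' t a)%:R / hh%:R)); last first.
    by move=> b _; rewrite widen_neq stT_widen.
  by rewrite sumr_const card_ord -[_ *+ g]mulr_natl; ring.
rewrite big_split /= -!mulr_sumr; apply: lerD.
  apply: ler_wpM2l; first by rewrite divr_ge0 ?ler0n.
  apply: sum_ind_le1.
    move=> a /tup_mem h; have := ltn_ord a; have h' : (a * t + t <= m'.+1)%N.
      have := ltn_ord a; nia.
    move: (h h') => {}h ha; nia.
  move=> a a' /tup_mem h /tup_mem h'; apply: val_inj.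
  have := ltn_ord a; have := ltn_ord a' => ha' ha.
  have e1 : (a * t + t <= m'.+1)%N by nia.
  have e2 : (a' * t + t <= m'.+1)%N by nia.
  move: (h e1) (h' e2) => /andP[p1 p2] /andP[p3 p4]; suff : (a : nat) = a' by []; nia.
apply: ler_wpM2l; first by rewrite divr_ge0 ?ler0n.
apply: sum_ind_le1.
  move=> a /tup_mem h; have := ltn_ord a; have h' : ((r + a) * t + t <= m'.+1)%N.
    have := ltn_ord a; nia.
  move: (h h') => {}h ha; rewrite /sm; apply/andP; split; nia.
move=> a a' /tup_mem h /tup_mem h'; apply: val_inj.
have := ltn_ord a; have := ltn_ord a' => ha' ha.
have e1 : ((r + a) * t + t <= m'.+1)%N by nia.
have e2 : ((r + a') * t + t <= m'.+1)%N by nia.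
move: (h e1) (h' e2) => /andP[p1 p2] /andP[p3 p4]; suff : (a : nat) = a' by []; nia.
Qed.


Definition sds (z : 'I_#|{: AT}| + 'I_m'.+1) : bool :=
  match z with inl i => (enum_val i).2 == ord_max | inr Y => sm Y end.


Lemma SC_sds Y : SC (cutd R sds) Y = r%:R * (1 + (g%:R - 1) * (sm Y)%:R).
Proof.
rewrite /SC /cutd /= (sum_ev (fun x : AT => ((x.2 == ord_max) != sm Y)%:R)) sum_pair.
rewrite (eq_bigr (fun _ => (1 + (g%:R - 1) * (sm Y)%:R))); last first.
  move=> a _; rewrite big_ord_recr /= eqxx.
  rewrite (eq_bigr (fun _ => (sm Y)%:R)); last by move=> b _; rewrite widen_neq; case: (sm Y).
  rewrite sumr_const card_ord; case: (sm Y) => /=.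
    by rewrite addr0 mulr1 addrC subrK.
  by rewrite mul0rn add0r mulr0 addr0.
by rewrite sumr_const card_ord mulr_natl.
Qed.

Definition Ps : R := \sum_(Y < m'.+1) p Y * (sm Y)%:R.

Lemma p_small : Ps * (g%:R - 1) <= D - 1.
Proof.
have side i x : x \in sti i -> sds (inr x) = sds (inl i).
  move=> /stT_mem h; rewrite /sds /sm /sti.
  case: (boolP ((enum_val i).2 == ord_max)) => e.
    by have [h1 h2] := blk_small e; apply/andP; split; lia.
  have h3 := blk_big e; case: leqP => h4 //=; lia.
have := cut_bound X0 md sti_uniq side X0.
rewrite /expect SC_sds /sm X0_val.
have -> : (r * t <= 0 < 2 * r * t)%N = false by case: leqP => // h; nia.
rewrite /= mulr0 addr0 mulr1.
rewrite (eq_bigr (fun Y => r%:R * (p Y + (g%:R - 1) * (p Y * (sm Y)%:R)))); last first.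
  by move=> Y _; rewrite SC_sds; ring.
rewrite -mulr_sumr big_split /= -mulr_sumr p_sum -/Ps => h.
have r0' : 0 < (r%:R : R) by rewrite ltr0n.
have : 1 + (g%:R - 1) * Ps <= D.
  by rewrite -(ler_pM2l r0') [r%:R * D]mulrC.
lra.
Qed.

Lemma E_bound : expect p (SW (uset R Sxi)) <=
  g%:R / hh%:R + (D - 1) / ((g%:R - 1) * t%:R).
Proof.
rewrite /expect.
have step : \sum_(Y < m'.+1) p Y * SW (uset R Sxi) Y <=
   \sum_(Y < m'.+1) (g%:R / hh%:R * (p Y * (Y < r * t)%N%:R)
   + 1 / t%:R * (p Y * (sm Y)%:R)).
  apply: ler_sum => Y _; case: (boolP (Y \in Hs)) => YH.
    rewrite p_hidden // !mul0r !mulr0 addr0 lexx //.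
  apply: le_trans (ler_wpM2l (p_ge0 Y) (SW_bound YH)) _.
  by rewrite le_eqVlt; apply/orP; left; apply/eqP; ring.
apply: le_trans step _.
rewrite big_split /= -!mulr_sumr -/Ps; apply: lerD.
  rewrite -[X in _ <= X]mulr1; apply: ler_wpM2l; first by rewrite divr_ge0 ?ler0n.
  have : \sum_(Y < m'.+1) p Y * (Y < r * t)%N%:R <= \sum_(Y < m'.+1) p Y.
    apply: ler_sum => Y _.
    by case: (Y < r * t)%N; rewrite ?mulr1 ?mulr0 ?lexx ?p_ge0.
  by rewrite p_sum.
have g0 : 0 < (g%:R : R) - 1.
  by rewrite subr_gt0 (_ : 1 = 1%:R) // ltr_nat.
have t0' : 0 < (t%:R : R) by rewrite ltr0n.
have hPs : Ps <= (D - 1) / (g%:R - 1) by rewrite ler_pdivlMr // p_small.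
have -> : (D - 1) / ((g%:R - 1) * t%:R) = 1 / t%:R * ((D - 1) / (g%:R - 1)).
  by field; apply/andP; split; rewrite gt_eqF.
by apply: ler_wpM2l => //; rewrite divr_ge0 ?ler0n.
Qed.

End Rule.

Lemma main_case (f : rule R m'.+1 t) (D : R) (B : R) : is_rule f -> metric_distortion_le f D ->
  0 <= B -> B * (g%:R / hh%:R + (D - 1) / ((g%:R - 1) * t%:R)) <= r%:R / (t.+1)%:R ->
  util_distortion_ge f B.
Proof.
move=> isr md B0 hB B' lt.
exists #|{: AT}|, sti, (uset R Sxi), Bnd; split; [exact: inst_unit|exact: inst_cons|].
apply: (conclude_lt lt).
- rewrite /expect; apply: sumr_ge0 => Y _; apply: mulr_ge0; first exact: p_ge0.
  by apply: sumr_ge0 => i _; exact: uset_ge0.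
- apply: lt_le_trans inst_SWB; by rewrite divr_gt0 // ltr0n.
- apply: le_trans inst_SWB; apply: le_trans hB.
  by apply: ler_wpM2l => //; exact: E_bound.
Qed.

End Inst.
Local Open Scope ring_scope.

Lemma arith (R : realType) (M T Q Rr G H D : R) :
 1 <= T -> 0 < M -> M <= 2 * Q * T -> Q <= 7 * Rr -> 0 <= Rr -> G ^+ 2 <= Q ->
 Q <= (G + 1) ^+ 2 -> 2 <= G -> M <= 2 * H -> 1 <= D ->
 1 / 256 * (M * Num.sqrt M) / (D * (T * Num.sqrt T)) * (G / H + (D - 1) / ((G - 1) * T))
   <= Rr / (T + 1).
Proof.
move=> T1 M0 MQ QR R0 GQ QG G2 MH D1.
have T0 : 0 < T by lra.
have D0 : 0 < D by lra.
have H0 : 0 < H by lra.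
have Q0 : 0 < Q by nra.
have sT0 : 0 < Num.sqrt T by rewrite sqrtr_gt0.
have sM0 : 0 <= Num.sqrt M by rewrite sqrtr_ge0.
set x := M / T. set z := Num.sqrt M / Num.sqrt T.
have x0 : 0 <= x by rewrite divr_ge0 // ltW.
have z0 : 0 <= z by rewrite divr_ge0 // ltW.
have zx : z ^+ 2 = x by rewrite expr_div_n !sqr_sqrtr // ltW.
have x2Q : x <= 2 * Q by rewrite ler_pdivrMr.
have zG : z * G <= 2 * Q.
  have : (z * G) ^+ 2 <= 2 * Q ^+ 2 by rewrite exprMn zx; nra.
  nra.
have zG1 : z <= 6 * (G - 1).
  have : z ^+ 2 <= (6 * (G - 1)) ^+ 2 by rewrite zx; nra.
  nra.
have xH : x / H <= 2 / T.
  rewrite ler_pdivrMr // /x.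
  have -> : 2 / T * H = (2 * H) / T by rewrite mulrAC.
  by rewrite ler_pM2r ?invr_gt0.
have e : 1 / 256 * (M * Num.sqrt M) / (D * (T * Num.sqrt T)) * (G / H + (D - 1) / ((G - 1) * T))
  = 1 / 256 * ((z * G) * (x / H) * (1 / D) + x * (z / (G - 1)) * ((D - 1) / D) * (1 / T)).
  rewrite /x /z; field; rewrite !gt_eqF //; lra.
rewrite e.
have G1 : 0 < G - 1 by lra.
have xH0 : 0 <= x / H by rewrite divr_ge0 // ltW.
have zG0 : 0 <= z * G by nra.
have zg0 : 0 <= z / (G - 1) by rewrite divr_ge0 // ltW.
have Dd0 : 0 <= (D - 1) / D by rewrite divr_ge0 //; lra.
have iD0 : 0 <= 1 / D by rewrite divr_ge0 // ltW.
have iT0 : 0 <= 1 / T by rewrite divr_ge0 // ltW.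
have a1 : (z * G) * (x / H) * (1 / D) <= (14 * Rr) * (2 / T) * 1.
  apply: ler_pM; first by rewrite mulr_ge0.
  - done.
  - by apply: ler_pM => //; lra.
  - by rewrite ler_pdivrMr // mul1r.
have a2 : x * (z / (G - 1)) * ((D - 1) / D) * (1 / T) <= (14 * Rr) * 6 * 1 * (1 / T).
  apply: ler_pM; first by apply: mulr_ge0 => //; apply: mulr_ge0.
  - done.
  - apply: ler_pM; first by rewrite mulr_ge0.
    + done.
    + apply: ler_pM => //; first lra.
      by rewrite ler_pdivrMr.
    + by rewrite ler_pdivrMr // mul1r; lra.
  - by [].
have fin : 1 / 256 * (14 * Rr * (2 / T) * 1 + 14 * Rr * 6 * 1 * (1 / T)) <= Rr / (T + 1).
  have -> : 1 / 256 * (14 * Rr * (2 / T) * 1 + 14 * Rr * 6 * 1 * (1 / T)) = Rr * (7 / 16 / T).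
    by field; rewrite gt_eqF.
  rewrite ler_wpM2l // ler_pdivrMr // [_ * T]mulrC ler_pdivlMr; lra.
apply: le_trans fin; apply: ler_wpM2l; first by rewrite divr_ge0.
exact: lerD.
Qed.

Lemma arith_triv (R : realType) (M T D : R) :
  1 <= T -> 0 < M -> M <= 4 * T -> 1 <= D ->
  1 / 256 * (M * Num.sqrt M) / (D * (T * Num.sqrt T)) < 1.
Proof.
move=> T1 M0 MT D1.
have T0 : 0 < T by lra.
have D0 : 0 < D by lra.
have sT0 : 0 < Num.sqrt T by rewrite sqrtr_gt0.
have sM0 : 0 <= Num.sqrt M by rewrite sqrtr_ge0.
set x := M / T. set z := Num.sqrt M / Num.sqrt T.
have x0 : 0 <= x by rewrite divr_ge0 // ltW.
have z0 : 0 <= z by rewrite divr_ge0 // ltW.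
have zx : z ^+ 2 = x by rewrite expr_div_n !sqr_sqrtr // ltW.
have x4 : x <= 4 by rewrite ler_pdivrMr.
have z2 : z <= 2 by nra.
have e : 1 / 256 * (M * Num.sqrt M) / (D * (T * Num.sqrt T)) = 1 / 256 * (x * z) * (1 / D).
  rewrite /x /z; field; rewrite !gt_eqF //.
rewrite e.
have iD : 1 / D <= 1 by rewrite ler_pdivrMr // mul1r.
have iD0 : 0 <= 1 / D by rewrite divr_ge0 // ltW.
have xz : x * z <= 8 by nra.
have xz0 : 0 <= x * z by nra.
nra.
Qed.

Lemma sqrt_ex q : exists g, (g * g <= q < g.+1 * g.+1)%N.
Proof.
elim: q => [|q [g /andP[h1 h2]]]; first by exists 0%N.
case: (ltnP q.+1 (g.+1 * g.+1)) => h3.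
  by exists g; apply/andP; split; lia.
by exists g.+1; apply/andP; split; nia.
Qed.

Lemma triv_case (R : realType) m' t (f : rule R m'.+1 t) (B : R) :
  (0 < t)%N -> (t <= m'.+1)%N -> B < 1 -> is_rule f -> util_distortion_ge f B.
Proof.
move=> t0 tm B1 isr B' lt.
have le0 : (0 * t + t <= m'.+1)%N by rewrite mul0n add0n.
pose S := fun _ : 'I_1 => [set x in tup m' t 0].
exists 1%N, (fun _ => tup m' t 0), (uset R S), (inord (0 * t)).
have X_in : inord (0 * t) \in tup m' t 0 := tup_mem0 t0 le0.
have cS i : #|S i| = t := card_tup le0.
have SWe Y : SW (uset R S) Y = (Y \in tup m' t 0)%:R / t%:R.
  by rewrite /SW big_ord1 /uset cS /S inE.
split.
- apply: (@uset_unit R) => i; apply/set0Pn; exists (inord (0 * t)); by rewrite inE.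
- apply: (@uset_cons R _ _ _ (inord 0)) => [i|i x h]; [exact: tup_uniq le0 | by rewrite inE].
have Sp : 0 < SW (uset R S) (inord (0 * t)) by rewrite SWe X_in divr_gt0 // ltr0n.
have SWle Y : SW (uset R S) Y <= SW (uset R S) (inord (0 * t)).
  rewrite !SWe X_in; apply: ler_wpM2r; first by rewrite invr_ge0 ler0n.
  by case: (Y \in _); rewrite ?ler01.
have [p0 p1] := isr 1%N (fun _ => tup m' t 0).
have E0 : 0 <= expect (f 1%N (fun _ => tup m' t 0)) (SW (uset R S)).
  rewrite /expect; apply: sumr_ge0 => Y _; apply: mulr_ge0 => //.
  by apply: sumr_ge0 => i _; exact: uset_ge0.
have ES : expect (f 1%N (fun _ => tup m' t 0)) (SW (uset R S)) <= SW (uset R S) (inord (0 * t)).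
  rewrite /expect -[X in _ <= X]mul1r -p1 mulr_suml; apply: ler_sum => Y _.
  by apply: ler_wpM2l.
apply: (conclude_lt lt) => //; nra.
Qed.

Unset Implicit Arguments.

Theorem mainTheorem10 (R : realType) :
  exists c : R, 0 < c /\
    forall (m t : nat) (D : R), (1 <= t <= m)%N -> 1 <= D ->
    forall f : rule R m t, is_rule f -> metric_distortion_le f D ->
      util_distortion_ge f
        (c * (m%:R * Num.sqrt (m%:R : R)) / (D * (t%:R * Num.sqrt (t%:R : R)))).
Proof.
exists (1 / 256); split; first by rewrite divr_gt0 // ltr0n.
move=> m t D /andP[t1 tm] D1 f isr md.
case: m tm f isr md => [|m'] tm f isr md; first by lia.
have := divn_eq m'.+1 t; have := ltn_pmod m'.+1 t1.
set q := (m'.+1 %/ t)%N => hmod hdiv.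
have T1 : 1 <= (t%:R : R) by rewrite ler1n.
have M0 : 0 < (m'.+1%:R : R) by rewrite ltr0n.
case: (ltnP q 4) => hq.
  apply: triv_case => //; apply: arith_triv => //.
  have h : (m'.+1%:R <= (4 * t)%:R :> R) by rewrite ler_nat; nia.
  by rewrite natrM in h.
have := divn_eq q 4; have := ltn_pmod q (isT : (0 < 4)%N).
set r := (q %/ 4)%N => hmod4 hdiv4.
have [g /andP[g1 g2]] := sqrt_ex q.
have r0 : (0 < r)%N by lia.
have g1' : (1 < g)%N by nia.
have hbig : (4 * r * t <= m'.+1)%N by nia.
apply: (@main_case R m' t r g t1 r0 g1' hbig f D _ isr md).
  apply: divr_ge0; first by apply: mulr_ge0; [rewrite divr_ge0 ?ler0n| rewrite mulr_ge0 ?ler0n ?sqrtr_ge0].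
  by apply: mulr_ge0; [lra| rewrite mulr_ge0 ?ler0n ?sqrtr_ge0].
have -> : ((t.+1)%:R : R) = t%:R + 1 by rewrite -addn1 natrD.
apply: (@arith R _ _ (q%:R)) => //.
- have h : (m'.+1%:R <= (2 * q * t)%:R :> R) by rewrite ler_nat; nia.
  by rewrite !natrM in h.
- have h : (q%:R <= (7 * r)%:R :> R) by rewrite ler_nat; nia.
  by rewrite !natrM in h.
- by rewrite -natrX ler_nat expnS expn1.
- have h : (q%:R <= (g.+1 * g.+1)%:R :> R) by rewrite ler_nat; nia.
  by rewrite natrM -addn1 natrD -expr2 in h.
- by rewrite ler_nat.
- have h : (m'.+1%:R <= (2 * hh m' t r)%:R :> R) by rewrite ler_nat /hh; nia.
  by rewrite natrM in h.
Qed.
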